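(* If $R\subset\mathbb{R}^2$ is (the open domain bounded by) a rectangle with side lengths $r$ and $s$, then \[ \max\left\{\sqrt2,\ \sqrt{1+\frac{\max\{r,s\}^2}{4\min\{r,s\}^2}}\right\}\le P(R)\le\sqrt{1+\frac{\max\{r,s\}^2}{\min\{r,s\}^2}}. \]
   Context: For four distinct points $a,b,c,d\in\mathbb{R}^2$ set $p(a,b,c,d)=\frac{|a-b||c-d|+|a-d||b-c|}{|a-c||b-d|}$. For a domain $D$ whose boundary is a Jordan curve, $P(D)=\sup p(a,b,c,d)$ over all distinct $a,b,c,d\in\partial D$ occurring in this order when $\partial D$ is traversed in the positive direction. *)

(* Defs.v *)
From Stdlib Require Import Reals Lra.
Open Scope R_scope.

Definition pt := (R * R)%type.

Definition dist2 (a b : pt) : R :=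
  sqrt ((fst a - fst b)^2 + (snd a - snd b)^2).

Definition pval (a b c d : pt) : R :=
  (dist2 a b * dist2 c d + dist2 a d * dist2 b c) / (dist2 a c * dist2 b d).

(* Vertices v0, v0+r u, v0+r u+s w, v0+s w, listed counterclockwise. *)
Definition rect_vertex (v0 : pt) (th r s : R) (k : nat) : pt :=
  let u := (cos th, sin th) in
  let w := (- sin th, cos th) in
  match k with
  | 0%nat => v0
  | 1%nat => (fst v0 + r * fst u, snd v0 + r * snd u)
  | 2%nat => (fst v0 + r * fst u + s * fst w, snd v0 + r * snd u + s * snd w)
  | _ => (fst v0 + s * fst w, snd v0 + s * snd w)
  end.

Definition lerp (p q : pt) (t : R) : pt :=
  (fst p + t * (fst q - fst p), snd p + t * (snd q - snd p)).

(* Positively oriented parametrization of the boundary on [0,4):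
   the k-th side is traversed for t in [k, k+1). Injective on [0,4). *)
Definition rect_param (v0 : pt) (th r s : R) (t : R) : pt :=
  let V := rect_vertex v0 th r s in
  if Rlt_dec t 1 then lerp (V 0%nat) (V 1%nat) t
  else if Rlt_dec t 2 then lerp (V 1%nat) (V 2%nat) (t - 1)
  else if Rlt_dec t 3 then lerp (V 2%nat) (V 3%nat) (t - 2)
  else lerp (V 3%nat) (V 0%nat) (t - 3).

(* a, b, c, d lie on the boundary and occur in this (cyclic) order when the
   boundary is traversed in the positive direction. *)
Definition in_order_on_rect (v0 : pt) (th r s : R) (a b c d : pt) : Prop :=
  exists ta tb tc td : R,
    0 <= ta < 4 /\ 0 <= tb < 4 /\ 0 <= tc < 4 /\ 0 <= td < 4 /\
    rect_param v0 th r s ta = a /\ rect_param v0 th r s tb = b /\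
    rect_param v0 th r s tc = c /\ rect_param v0 th r s td = d /\
    ((ta < tb < tc /\ tc < td) \/ (tb < tc < td /\ td < ta) \/
     (tc < td < ta /\ ta < tb) \/ (td < ta < tb /\ tb < tc)).

(* The set of values p(a,b,c,d) whose supremum is P(R). *)
Definition Pset (v0 : pt) (th r s : R) (x : R) : Prop :=
  exists a b c d : pt,
    a <> b /\ a <> c /\ a <> d /\ b <> c /\ b <> d /\ c <> d /\
    in_order_on_rect v0 th r s a b c d /\ x = pval a b c d.

(* Main.v *)
Require Import Defs.
From Stdlib Require Import Reals Lra Psatz.
Open Scope R_scope.
Definition nu (t : R) : R := if Rlt_dec t 1 then t else if Rlt_dec t 2 then 1 else if Rlt_dec t 3 then 3-t else 0.
Definition nv (t : R) : R := if Rlt_dec t 1 then 0 else if Rlt_dec t 2 then t-1 else if Rlt_dec t 3 then 1 else 4-t.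
Ltac pp a b := let P := fresh "P" in assert (P : 0 <= a*b) by (apply Rmult_le_pos; lra).
Ltac dsides := unfold nu, nv; repeat match goal with |- context [Rlt_dec ?t ?c] => destruct (Rlt_dec t c) end.
Definition RA p v n := (nu p - nu v)*(nu n - nu v).
Definition RB p v n := (nv p - nv v)*(nv n - nv v).
Definition IN p v n := (nu n - nu v)*(nv p - nv v) - (nv n - nv v)*(nu p - nu v).

Lemma between_N t1 tv t2 : 0<=t1 -> t1<tv -> tv<t2 -> t2<4 ->
  ((0 <= t1 /\ t2 < 2) \/ (1 <= t1 /\ t2 < 3) \/ (2 <= t1)) ->
  RA t1 tv t2 <= 0 /\ RB t1 tv t2 <= 0.
Proof. intros. unfold RA, RB. dsides; try lra; split; try nra.  Qed.

Lemma corner0_N t1 tw t2 : 0<=t1 -> t1<1 -> 3<=t2 -> t2<4 -> 0<=tw -> tw<4 -> (tw<t1 \/ t2<tw) ->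
  RA t2 tw t1 <= 0 /\ RB t2 tw t1 <= 0.
Proof. intros. unfold RA, RB. dsides; try lra; split; try nra.  Qed.

Lemma cone02_N t1 tv t2 : 0<=t1 -> t1<1 -> 2<=t2 -> t2<3 -> t1<tv -> tv<t2 ->
  RB t1 tv t2 <= 0 /\ RA t1 tv t2 <= IN t1 tv t2.
Proof. intros. unfold RA, RB, IN. dsides; try lra; split; try nra. all: pp (2-tv) (1-t1); pp (tv-1) (t2-2); pp (2-tv) (t2-2); pp (tv-1) (1-t1); nra. Qed.

Lemma cone02W_N t1 tw t2 : 0<=t1 -> t1<1 -> 2<=t2 -> t2<3 -> 0<=tw -> tw<4 -> (tw<t1 \/ t2<tw) ->
  RB t2 tw t1 <= 0 /\ RA t2 tw t1 <= IN t2 tw t1.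
Proof. intros. unfold RA, RB, IN. dsides; try lra; split; try nra. all: pp (4-tw) (3-t2); pp (tw-3) t1; pp (4-tw) t1; pp (tw-3) (3-t2); nra. Qed.

Lemma cone13_N t1 tv t2 : 1<=t1 -> t1<2 -> 3<=t2 -> t2<4 -> t1<tv -> tv<t2 ->
  RA t1 tv t2 <= 0 /\ RB t1 tv t2 <= IN t1 tv t2.
Proof. intros. unfold RA, RB, IN. dsides; try lra; split; try nra. all: pp (3-tv) (2-t1); pp (tv-2) (t2-3); pp (3-tv) (t1-1); pp (tv-2) (4-t2); pp (3-tv) (t2-3); pp (tv-2) (2-t1); pp (3-tv) (4-t2); pp (tv-2) (t1-1); nra. Qed.

Lemma cone13W_N t1 tw t2 : 1<=t1 -> t1<2 -> 3<=t2 -> t2<4 -> 0<=tw -> tw<4 -> (tw<t1 \/ t2<tw) ->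
  RA t2 tw t1 <= 0 /\ RB t2 tw t1 <= IN t2 tw t1.
Proof. intros. unfold RA, RB, IN. dsides; try lra; split; try nra. all: pp (1-tw) (4-t2); pp tw (t1-1); pp (1-tw) (t1-1); pp tw (4-t2); pp (1-tw) (t2-3); pp tw (2-t1); pp (1-tw) (2-t1); pp tw (t2-3); nra. Qed.
Lemma prod0 x y : x*y = 0 -> y < 0 -> x = 0.
Proof. intros. destruct (Rmult_integral _ _ H); lra. Qed.

Lemma cone_combine M m p q x1 y1 x2 y2 : 0<p -> 0<q -> p*m <= q*M -> m <= M -> 0 < m ->
  0 < x1 -> 0 < x2 -> 0 <= y1*p - x1*q -> 0 <= y2*p - x2*q ->
  0 <= (M^2-m^2)*(x1*y2+x2*y1) - 2*M*m*(x1*x2 - y1*y2).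
Proof.
  intros Hp Hq Hpq HmM Hm Hx1 Hx2 H1 H2.
  assert (HM : 0 < M) by lra.
  assert (E1 : 0 <= M*y1 - m*x1).
  { assert (0 <= p*(M*y1 - m*x1)); [|nra].
    assert (x1*(q*M - p*m) >= 0) by nra. nra. }
  assert (E2 : 0 <= M*y2 - m*x2).
  { assert (0 <= p*(M*y2 - m*x2)); [|nra].
    assert (x2*(q*M - p*m) >= 0) by nra. nra. }
  assert (Id : M*((M^2-m^2)*(x1*y2+x2*y1) - 2*M*m*(x1*x2 - y1*y2)) =
     (M^2+m^2)*(x1*(M*y2-m*x2)+x2*(M*y1-m*x1)) + 2*m*((M*y1-m*x1)*(M*y2-m*x2))) by ring.
  assert (0 <= (M^2+m^2)*(x1*(M*y2-m*x2)+x2*(M*y1-m*x1)) + 2*m*((M*y1-m*x1)*(M*y2-m*x2))).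
  { apply Rplus_le_le_0_compat. apply Rmult_le_pos. nra. nra. apply Rmult_le_pos. lra. nra. }
  rewrite <- Id in H. nra.
Qed.

Definition LoC M m x1 y1 x2 y2 := x1 <= 0 \/ x2 <= 0 \/
  0 <= (M^2-m^2)*(x1*y2+x2*y1) - 2*M*m*(x1*x2 - y1*y2).

Lemma Phi_lemma M m xa ya xb yb xc yc xd yd L : m <= M -> 0 < m ->
  0 <= ya -> 0 <= yb -> 0 <= yc -> 0 <= yd -> 0 < L ->
  (xa*xc - ya*yc)*(xb*xd - yb*yd) - (xa*yc + ya*xc)*(xb*yd + yb*xd) = L ->
  (xa*xc - ya*yc)*(xb*yd + yb*xd) + (xa*yc + ya*xc)*(xb*xd - yb*yd) = 0 ->
  (0 < xa \/ 0 < ya) ->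
  LoC M m xa ya xc yc -> LoC M m xb yb xd yd ->
  let W1 := xa*xc - ya*yc in let W2 := xa*yc + ya*xc in
  W1 <= 0 \/ 4*M^2*m^2*W1^2 <= (M^2-m^2)^2*W2^2.
Proof.
  intros HmM Hm Hya Hyb Hyc Hyd HL E1 E2 Hal Lac Lbd W1 W2.
  set (V1 := xb*xd - yb*yd) in *. set (V2 := xb*yd + yb*xd) in *.
  fold W1 W2 in E1, E2.
  destruct (Rle_dec W1 0) as [h|h]; [left; exact h| right].
  apply Rnot_le_lt in h.
  assert (HM: 0 < M) by lra.
  destruct (Rle_dec 0 W2) as [h2|h2].
  - destruct Lac as [Lx|[Lx|Lx]].
    + exfalso. unfold W1 in h. unfold W2 in h2.
      assert (xa*xc > 0) by nra.
      assert (xa < 0) by (destruct (Rtotal_order xa 0) as [?|[?|?]]; subst; nra).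
      assert (xc < 0) by nra.
      assert (xa*yc <= 0) by nra. assert (ya*xc <= 0) by nra.
      assert (ya*xc = 0) by lra. assert (ya = 0) by (apply (prod0 ya xc); lra). lra.
    + exfalso. unfold W1 in h. unfold W2 in h2.
      assert (xa*xc > 0) by nra.
      assert (xc < 0) by (destruct (Rtotal_order xc 0) as [?|[?|?]]; subst; nra).
      assert (xa < 0) by nra.
      assert (xa*yc <= 0) by nra. assert (ya*xc <= 0) by nra.
      assert (ya*xc = 0) by lra. assert (ya = 0) by (apply (prod0 ya xc); lra). lra.
    + fold W1 W2 in Lx.
      assert (2*M*m*W1 <= (M^2-m^2)*W2) by (unfold W1, W2 in *; nra).
      assert (0 <= 2*M*m*W1) by (apply Rmult_le_pos; [nra|lra]).
      assert (4*M^2*m^2*W1^2 = (2*M*m*W1)^2) by ring. rewrite H1.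
      replace ((M^2-m^2)^2*W2^2) with (((M^2-m^2)*W2)^2) by ring.
      apply pow_incr. lra.
  - apply Rnot_le_lt in h2.
    assert (HV1 : 0 < V1).
    { assert (V1 * (W1^2 + W2^2) = L * W1) by nra.
      assert (0 < W1^2+W2^2) by nra. nra. }
    assert (HV2 : 0 < V2).
    { assert (W1*V2 = - W2*V1) by lra. nra. }
    destruct Lbd as [Lx|[Lx|Lx]].
    + exfalso. unfold V1 in HV1. unfold V2 in HV2.
      assert (xb*xd > 0) by nra.
      assert (xb < 0) by (destruct (Rtotal_order xb 0) as [?|[?|?]]; subst; nra).
      assert (xd < 0) by nra. nra.
    + exfalso. unfold V1 in HV1. unfold V2 in HV2.
      assert (xb*xd > 0) by nra.
      assert (xd < 0) by (destruct (Rtotal_order xd 0) as [?|[?|?]]; subst; nra).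
      assert (xb < 0) by nra. nra.
    + fold V1 V2 in Lx.
      assert (2*M*m*V1 <= (M^2-m^2)*V2) by (unfold V1, V2 in *; nra).
      assert (Hw : 0 < W1^2+W2^2) by nra.
      assert (EV1 : V1 * (W1^2 + W2^2) = L * W1) by nra.
      assert (EV2 : V2 * (W1^2 + W2^2) = - L * W2) by nra.
      set (S := W1^2+W2^2) in *.
      assert (EV1' : V1 = L*W1/S) by (rewrite <- EV1; field; lra).
      assert (EV2' : V2 = -L*W2/S) by (rewrite <- EV2; field; lra).
      assert (HLS : 0 < L/S) by (apply Rdiv_lt_0_compat; lra).
      assert (2*M*m*W1 <= (M^2-m^2)*(-W2)).
      { apply Rmult_le_reg_r with (L/S). exact HLS.
        replace (2*M*m*W1*(L/S)) with (2*M*m*V1) by (rewrite EV1'; field; lra).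
        replace ((M^2-m^2)*(-W2)*(L/S)) with ((M^2-m^2)*V2) by (rewrite EV2'; field; lra).
        lra. }
      assert (0 <= 2*M*m*W1) by (apply Rmult_le_pos; [nra|lra]).
      assert (4*M^2*m^2*W1^2 = (2*M*m*W1)^2) by ring. rewrite H2.
      replace (W2^2) with ((-W2)^2) by ring.
      replace ((M ^ 2 - m ^ 2) ^ 2 * (- W2) ^ 2) with (((M ^ 2 - m ^ 2) * (- W2)) ^ 2) by ring.
      apply pow_incr. lra.
Qed.

Lemma H_lemma M m A B W1 W2 : m <= M -> 0 < m -> 0 <= A -> 0 <= B ->
  A*B = W1^2 + W2^2 ->
  (W1 <= 0 \/ 4*M^2*m^2*W1^2 <= (M^2-m^2)^2*W2^2) ->
  0 <= (M^2-m^2)*(A+B) - 2*(M^2+m^2)*W1.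
Proof.
  intros HmM Hm HA HB HAB [h|h].
  - assert (0 <= M^2-m^2) by nra. nra.
  - assert (0 <= M^2-m^2) by nra.
    destruct (Rle_dec W1 0) as [h'|h']. nra.
    assert (((M^2-m^2)*(A+B))^2 >= (2*(M^2+m^2)*W1)^2).
    { assert ((A+B)^2 >= 4*(A*B)).
      { assert ((A+B)^2 - 4*(A*B) = (A-B)^2) by ring. assert (0 <= (A-B)^2) by apply pow2_ge_0. lra. } rewrite HAB in H0.
      assert (((M^2-m^2)*(A+B))^2 = (M^2-m^2)^2*(A+B)^2) by ring.
      assert ((M^2-m^2)^2*(A+B)^2 >= (M^2-m^2)^2*(4*(W1^2+W2^2))).
      { apply Rmult_ge_compat_l. nra. lra. }
      assert ((2*(M^2+m^2)*W1)^2 = 4*(M^2-m^2)^2*W1^2 + 4*(4*M^2*m^2*W1^2)) by ring.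
      assert ((M^2-m^2)^2*(4*(W1^2+W2^2)) = 4*(M^2-m^2)^2*W1^2 + 4*((M^2-m^2)^2*W2^2)) by ring.
      lra. }
    assert (0 <= (M^2-m^2)*(A+B)) by nra.
    assert (0 <= 2*(M^2+m^2)*W1) by nra.
    destruct (Rle_dec (2*(M^2+m^2)*W1) ((M^2-m^2)*(A+B))); [lra|].
    exfalso. assert (Hlt : (M^2-m^2)*(A+B) < 2*(M^2+m^2)*W1) by lra.
    assert (((M^2-m^2)*(A+B))^2 < (2*(M^2+m^2)*W1)^2).
    { apply Rsqr_incrst_1 in Hlt; try lra. unfold Rsqr in Hlt. nra. }
    lra.
Qed.
Definition zre' px py vx vy nx ny := (px-vx)*(nx-vx) + (py-vy)*(ny-vy).
Definition zim' px py vx vy nx ny := (nx-vx)*(py-vy) - (ny-vy)*(px-vx).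
Definition D' px py qx qy := (px-qx)^2 + (py-qy)^2.
Lemma ident ax ay bx by_ cx cy dx dy :
  let xa := zre' dx dy ax ay bx by_ in let ya := zim' dx dy ax ay bx by_ in
  let xb := zre' ax ay bx by_ cx cy in let yb := zim' ax ay bx by_ cx cy in
  let xc := zre' bx by_ cx cy dx dy in let yc := zim' bx by_ cx cy dx dy in
  let xd := zre' cx cy dx dy ax ay in let yd := zim' cx cy dx dy ax ay in
  let W1 := xa*xc - ya*yc in let W2 := xa*yc + ya*xc in
  let V1 := xb*xd - yb*yd in let V2 := xb*yd + yb*xd in
  let A := D' ax ay bx by_ * D' cx cy dx dy in let B := D' ax ay dx dy * D' bx by_ cx cy in
  D' ax ay cx cy * D' bx by_ dx dy = A + B - 2*W1 /\ A*B = W1^2 + W2^2 /\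
  W1*V1 - W2*V2 = D' ax ay bx by_ * D' bx by_ cx cy * D' cx cy dx dy * D' dx dy ax ay /\
  W1*V2 + W2*V1 = 0.
Proof. cbv zeta. unfold zre',zim',D'. repeat split; ring. Qed.
Lemma orientN t1 t2 t3 : 0<=t1 -> t1<t2 -> t2<t3 -> t3<4 ->
  0 <= (nu t2 - nu t1)*(nv t3 - nv t1) - (nv t2 - nv t1)*(nu t3 - nu t1).
Proof. intros. dsides; try lra; nra. Qed.

Lemma injN t1 t2 : 0<=t1 -> t1<t2 -> t2<4 -> 0 < (nu t1 - nu t2)^2 + (nv t1 - nv t2)^2.
Proof. intros. dsides; try lra; nra. Qed.

Definition X r t := r * nu t.
Definition Y s t := s * nv t.
Definition zre r s p v n := zre' (X r p) (Y s p) (X r v) (Y s v) (X r n) (Y s n).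
Definition zim r s p v n := zim' (X r p) (Y s p) (X r v) (Y s v) (X r n) (Y s n).
Definition Dd r s p q := D' (X r p) (Y s p) (X r q) (Y s q).

Lemma zre_N r s p v n : zre r s p v n = r^2 * RA p v n + s^2 * RB p v n.
Proof. unfold zre, zre', RA, RB, X, Y. ring. Qed.
Lemma zim_N r s p v n : zim r s p v n = r*s * IN p v n.
Proof. unfold zim, zim', IN, X, Y. ring. Qed.

Lemma Dd_pos r s p q : 0<r -> 0<s -> 0<=p -> p<q -> q<4 -> 0 < Dd r s p q.
Proof. intros. pose proof (injN p q). unfold Dd, D', X, Y.
  replace ((r * nu p - r * nu q) ^ 2 + (s * nv p - s * nv q) ^ 2) with
    (r^2 * (nu p - nu q)^2 + s^2*(nv p - nv q)^2) by ring.
  assert (0 <= (nu p - nu q)^2) by apply pow2_ge_0.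
  assert (0 <= (nv p - nv q)^2) by apply pow2_ge_0.
  assert (0 < r^2) by nra. assert (0 < s^2) by nra.
  specialize (H4 H1 H2 H3). destruct (Rle_dec ((nu p - nu q)^2) 0).
  - assert (0 < (nv p - nv q)^2) by lra. nra.
  - nra.
Qed.

Lemma zim_nonneg r s p v n : 0<r -> 0<s -> 0<=p -> 0<=v -> 0<=n -> p<4 -> v<4 -> n<4 ->
  ((v<n /\ n<p) \/ (p<v /\ v<n) \/ (n<p /\ p<v)) -> 0 <= zim r s p v n.
Proof.
  intros. rewrite zim_N. apply Rmult_le_pos; [nra|]. unfold IN.
  destruct H7 as [[? ?]|[[? ?]|[? ?]]].
  - pose proof (orientN v n p). lra.
  - pose proof (orientN p v n). nra.
  - pose proof (orientN n p v). nra.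
Qed.
Lemma AL0 u1 u2 v1 v2 : 0 <= u2 -> 0 <= v2 -> (0 < u2 \/ 0 < u1) -> (0 < v2 \/ 0 < v1) ->
  0 <= u1*v2 - u2*v1 ->
  0 < u1*v1 + u2*v2 \/ 0 < u1*v2 - u2*v1.
Proof.
  intros H1 H2 [h1|h1] [h2|h2] Hc.
  - destruct (Rlt_dec 0 (u1*v2 - u2*v1)); [right; lra|left].
    assert (Ha : u1*v2 = u2*v1) by lra.
    assert (Hb : u1*v1*(u2*v2) = (u2*v1)^2) by (replace ((u2*v1)^2) with ((u1*v2)*(u2*v1)) by (rewrite Ha; ring); ring).
    assert (Hc2 : 0 < u2*v2) by nra.
    assert (Hd : 0 <= (u2*v1)^2) by apply pow2_ge_0.
    assert (0 <= u1*v1) by (apply (Rmult_le_reg_r (u2*v2)); [lra| rewrite Hb; lra]). nra.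
  - destruct (Rlt_dec 0 (u1*v2 - u2*v1)); [right; lra|left].
    assert (0 < u1*v2) by nra.
    assert (0 < u1) by (destruct (Rle_dec u1 0); [nra|lra]). nra.
  - destruct (Rlt_dec 0 (u1*v2 - u2*v1)); [right; lra|left].
    assert (0 < u2*v1) by nra.
    assert (0 < v1) by (destruct (Rle_dec v1 0); [nra|lra]). nra.
  - left. nra.
Qed.

Lemma G0 ta ty : 0<=ta -> ta<1 -> ta<ty -> ty<4 -> 0 <= nv ty - nv ta /\ (0 < nv ty - nv ta \/ 0 < nu ty - nu ta).
Proof. intros. dsides; try lra; (split; [lra| first [left; lra | right; lra]]). Qed.
Lemma G1 ta ty : 1<=ta -> ta<2 -> ta<ty -> ty<4 -> 0 <= -(nu ty - nu ta) /\ (0 < -(nu ty - nu ta) \/ 0 < nv ty - nv ta).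
Proof. intros. dsides; try lra; (split; [lra| first [left; lra | right; lra]]). Qed.
Lemma G2 ta ty : 2<=ta -> ta<3 -> ta<ty -> ty<4 -> 0 <= -(nv ty - nv ta) /\ (0 < -(nv ty - nv ta) \/ 0 < -(nu ty - nu ta)).
Proof. intros. dsides; try lra; (split; [lra| first [left; lra | right; lra]]). Qed.
Lemma G3 ta ty : 3<=ta -> ta<4 -> ta<ty -> ty<4 -> 0 <= nu ty - nu ta /\ (0 < nu ty - nu ta \/ 0 < -(nv ty - nv ta)).
Proof. intros. dsides; try lra; (split; [lra| first [left; lra | right; lra]]). Qed.

Lemma posmul a x : 0 < a -> 0 <= x /\ (0 < x \/ 0 < 0) -> True. Proof. auto. Qed.

Lemma alpha_lt_pi r s ta tb td : 0<r -> 0<s -> 0<=ta -> ta<tb -> tb<td -> td<4 ->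
  0 < zre r s td ta tb \/ 0 < zim r s td ta tb.
Proof.
  intros Hr Hs H0 H1 H2 H3.
  assert (Hz : 0 <= zim r s td ta tb) by (apply zim_nonneg; lra).
  revert Hz.
  assert (Ere : zre r s td ta tb = (r*(nu tb - nu ta))*(r*(nu td - nu ta)) + (s*(nv tb - nv ta))*(s*(nv td - nv ta)))
    by (unfold zre, zre', X, Y; ring).
  assert (Eim : zim r s td ta tb = (r*(nu tb - nu ta))*(s*(nv td - nv ta)) - (s*(nv tb - nv ta))*(r*(nu td - nu ta)))
    by (unfold zim, zim', X, Y; ring).
  rewrite Ere, Eim. intro Hz.
  set (ub := nu tb - nu ta) in *. set (vb := nv tb - nv ta) in *.
  set (ud := nu td - nu ta) in *. set (vd := nv td - nv ta) in *.
  destruct (Rlt_dec ta 1).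
  { destruct (G0 ta tb) as [g1 g2]; try lra. destruct (G0 ta td) as [g3 g4]; try lra.
    fold ub vb ud vd in g1, g2, g3, g4.
    assert (HH : 0 < (r*ub)*(r*ud)+(s*vb)*(s*vd) \/ 0 < (r*ub)*(s*vd)-(s*vb)*(r*ud)) by (apply AL0; [nra|nra|destruct g2;[left|right];nra|destruct g4;[left|right];nra|nra]).
    destruct HH; [left|right]; nra. }
  destruct (Rlt_dec ta 2).
  { destruct (G1 ta tb) as [g1 g2]; try lra. destruct (G1 ta td) as [g3 g4]; try lra.
    fold ub vb ud vd in g1, g2, g3, g4.
    assert (HH : 0 < (s*vb)*(s*vd)+(-(r*ub))*(-(r*ud)) \/ 0 < (s*vb)*(-(r*ud))-(-(r*ub))*(s*vd)) by (apply AL0; [nra|nra|destruct g2;[left|right];nra|destruct g4;[left|right];nra|nra]).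
    destruct HH; [left|right]; nra. }
  destruct (Rlt_dec ta 3).
  { destruct (G2 ta tb) as [g1 g2]; try lra. destruct (G2 ta td) as [g3 g4]; try lra.
    fold ub vb ud vd in g1, g2, g3, g4.
    assert (HH : 0 < (-(r*ub))*(-(r*ud))+(-(s*vb))*(-(s*vd)) \/ 0 < (-(r*ub))*(-(s*vd))-(-(s*vb))*(-(r*ud))) by (apply AL0; [nra|nra|destruct g2;[left|right];nra|destruct g4;[left|right];nra|nra]).
    destruct HH; [left|right]; nra. }
  { destruct (G3 ta tb) as [g1 g2]; try lra. destruct (G3 ta td) as [g3 g4]; try lra.
    fold ub vb ud vd in g1, g2, g3, g4.
    assert (HH : 0 < (-(s*vb))*(-(s*vd))+(r*ub)*(r*ud) \/ 0 < (-(s*vb))*(r*ud)-(r*ub)*(-(s*vd))) by (apply AL0; [nra|nra|destruct g2;[left|right];nra|destruct g4;[left|right];nra|nra]).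
    destruct HH; [left|right]; nra. }
Qed.

Lemma part1 r s M m t1 tv t2 tw : 0<r -> 0<s -> m <= M -> 0 < m -> r*m <= s*M -> s*m <= r*M ->
  0 <= t1 -> t1 < tv -> tv < t2 -> t2 < 4 -> 0 <= tw -> tw < 4 -> (tw < t1 \/ t2 < tw) ->
  LoC M m (zre r s t2 tw t1) (zim r s t2 tw t1) (zre r s t1 tv t2) (zim r s t1 tv t2).
Proof.
  intros Hr Hs HmM Hm Hrm Hsm H0 H1 H2 H3 Hw0 Hw4 Hw.
  assert (Hr2 : 0 < r^2) by nra. assert (Hs2 : 0 < s^2) by nra.
  assert (Cone : forall p q, 0 < p -> 0 < q -> p*m <= q*M ->
     0 <= zim r s t2 tw t1 * p - zre r s t2 tw t1 * q ->
     0 <= zim r s t1 tv t2 * p - zre r s t1 tv t2 * q ->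
     LoC M m (zre r s t2 tw t1) (zim r s t2 tw t1) (zre r s t1 tv t2) (zim r s t1 tv t2)).
  { intros p q Hp Hq Hpq E1 E2. unfold LoC.
    destruct (Rle_dec (zre r s t2 tw t1) 0); [left; auto|].
    destruct (Rle_dec (zre r s t1 tv t2) 0); [right; left; auto|].
    right; right. apply cone_combine with p q; auto; lra. }
  unfold LoC.
  destruct (Rlt_dec t1 1); [destruct (Rlt_dec t2 2); [|destruct (Rlt_dec t2 3)]|
     destruct (Rlt_dec t1 2); [destruct (Rlt_dec t2 3)|]].
  - right; left. destruct (between_N t1 tv t2) as [A B]; try lra.
    rewrite zre_N. nra.
  - apply (Cone r s); try lra.
    + destruct (cone02W_N t1 tw t2) as [A B]; try lra.
      rewrite zre_N, zim_N.
      replace (r * s * IN t2 tw t1 * r - (r ^ 2 * RA t2 tw t1 + s ^ 2 * RB t2 tw t1) * s)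
        with (r^2*s*(IN t2 tw t1 - RA t2 tw t1) + s^2*s*(- RB t2 tw t1)) by ring.
      apply Rplus_le_le_0_compat; apply Rmult_le_pos; try nra.
    + destruct (cone02_N t1 tv t2) as [A B]; try lra.
      rewrite zre_N, zim_N.
      replace (r * s * IN t1 tv t2 * r - (r ^ 2 * RA t1 tv t2 + s ^ 2 * RB t1 tv t2) * s)
        with (r^2*s*(IN t1 tv t2 - RA t1 tv t2) + s^2*s*(- RB t1 tv t2)) by ring.
      apply Rplus_le_le_0_compat; apply Rmult_le_pos; try nra.
  - left. destruct (corner0_N t1 tw t2) as [A B]; try lra.
    rewrite zre_N. nra.
  - right; left. destruct (between_N t1 tv t2) as [A B]; try lra.
    rewrite zre_N. nra.
  - apply (Cone s r); try lra.
    + destruct (cone13W_N t1 tw t2) as [A B]; try lra.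
      rewrite zre_N, zim_N.
      replace (r * s * IN t2 tw t1 * s - (r ^ 2 * RA t2 tw t1 + s ^ 2 * RB t2 tw t1) * r)
        with (s^2*r*(IN t2 tw t1 - RB t2 tw t1) + r^2*r*(- RA t2 tw t1)) by ring.
      apply Rplus_le_le_0_compat; apply Rmult_le_pos; try nra.
    + destruct (cone13_N t1 tv t2) as [A B]; try lra.
      rewrite zre_N, zim_N.
      replace (r * s * IN t1 tv t2 * s - (r ^ 2 * RA t1 tv t2 + s ^ 2 * RB t1 tv t2) * r)
        with (s^2*r*(IN t1 tv t2 - RB t1 tv t2) + r^2*r*(- RA t1 tv t2)) by ring.
      apply Rplus_le_le_0_compat; apply Rmult_le_pos; try nra.
  - right; left. destruct (between_N t1 tv t2) as [A B]; try lra.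
    rewrite zre_N. nra.
Qed.

Lemma LoC_sym M m x1 y1 x2 y2 : LoC M m x1 y1 x2 y2 -> LoC M m x2 y2 x1 y1.
Proof. unfold LoC. intros [h|[h|h]]; [right;left;auto|left;auto|right;right; nra]. Qed.

Lemma core r s M m ta tb tc td : 0<r -> 0<s -> m <= M -> 0 < m -> r*m <= s*M -> s*m <= r*M ->
  0 <= ta -> ta < tb -> tb < tc -> tc < td -> td < 4 ->
  2*m^2*(Dd r s ta tb * Dd r s tc td + Dd r s ta td * Dd r s tb tc)
    <= (M^2+m^2) * (Dd r s ta tc * Dd r s tb td).
Proof.
  intros Hr Hs HmM Hm Hrm Hsm H0 H1 H2 H3 H4.
  pose proof (ident (X r ta) (Y s ta) (X r tb) (Y s tb) (X r tc) (Y s tc) (X r td) (Y s td)) as Id.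
  cbv zeta in Id. fold (zre r s td ta tb) (zim r s td ta tb) (zre r s ta tb tc) (zim r s ta tb tc)
    (zre r s tb tc td) (zim r s tb tc td) (zre r s tc td ta) (zim r s tc td ta) in Id.
  fold (Dd r s ta tc) (Dd r s tb td) (Dd r s ta tb) (Dd r s tc td) (Dd r s ta td) (Dd r s tb tc)
    (Dd r s td ta) in Id.
  destruct Id as [I1 [I2 [I3 I4]]].
  set (xa := zre r s td ta tb) in *. set (ya := zim r s td ta tb) in *.
  set (xb := zre r s ta tb tc) in *. set (yb := zim r s ta tb tc) in *.
  set (xc := zre r s tb tc td) in *. set (yc := zim r s tb tc td) in *.
  set (xd := zre r s tc td ta) in *. set (yd := zim r s tc td ta) in *.
  assert (Hya : 0 <= ya) by (apply zim_nonneg; lra).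
  assert (Hyb : 0 <= yb) by (apply zim_nonneg; lra).
  assert (Hyc : 0 <= yc) by (apply zim_nonneg; lra).
  assert (Hyd : 0 <= yd) by (apply zim_nonneg; lra).
  assert (Pab : 0 < Dd r s ta tb) by (apply Dd_pos; lra).
  assert (Pbc : 0 < Dd r s tb tc) by (apply Dd_pos; lra).
  assert (Pcd : 0 < Dd r s tc td) by (apply Dd_pos; lra).
  assert (Pad : 0 < Dd r s ta td) by (apply Dd_pos; lra).
  assert (Pda : Dd r s td ta = Dd r s ta td) by (unfold Dd, D'; ring).
  rewrite Pda in I3.
  assert (HL : 0 < Dd r s ta tb * Dd r s tb tc * Dd r s tc td * Dd r s ta td).
  { repeat apply Rmult_lt_0_compat; auto. }
  assert (Lac : LoC M m xa ya xc yc).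
  { apply (part1 r s M m tb tc td ta); lra. }
  assert (Lbd : LoC M m xb yb xd yd).
  { apply LoC_sym. apply (part1 r s M m ta tb tc td); lra. }
  assert (Hal : 0 < xa \/ 0 < ya) by (apply alpha_lt_pi; lra).
  pose proof (Phi_lemma M m xa ya xb yb xc yc xd yd _ HmM Hm Hya Hyb Hyc Hyd HL I3 I4 Hal Lac Lbd) as Ph.
  cbv zeta in Ph.
  pose proof (H_lemma M m (Dd r s ta tb * Dd r s tc td) (Dd r s ta td * Dd r s tb tc)
     (xa*xc - ya*yc) (xa*yc + ya*xc) HmM Hm) as HH.
  assert (0 <= Dd r s ta tb * Dd r s tc td) by nra.
  assert (0 <= Dd r s ta td * Dd r s tb tc) by nra.
  specialize (HH H H5 I2 Ph).
  rewrite I1. nra.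
Qed.

Lemma frame v0 th r s t : rect_param v0 th r s t =
  (fst v0 + X r t * cos th - Y s t * sin th, snd v0 + X r t * sin th + Y s t * cos th).
Proof.
  unfold rect_param, lerp, rect_vertex, X, Y, nu, nv; simpl.
  destruct (Rlt_dec t 1); [|destruct (Rlt_dec t 2); [|destruct (Rlt_dec t 3)]];
  simpl; f_equal; ring.
Qed.

Lemma dist_frame v0 th r s t1 t2 :
  dist2 (rect_param v0 th r s t1) (rect_param v0 th r s t2) = sqrt (Dd r s t1 t2).
Proof.
  rewrite !frame. unfold dist2, Dd, D'; simpl. f_equal.
  pose proof (sin2_cos2 th) as E. unfold Rsqr in E.
  transitivity (((X r t1 - X r t2)^2 + (Y s t1 - Y s t2)^2) * (sin th * sin th + cos th * cos th)).
  ring. rewrite E. ring.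
Qed.

Lemma dist2_sym p q : dist2 p q = dist2 q p.
Proof. unfold dist2. f_equal. ring. Qed.

Lemma pval_rot a b c d : pval b c d a = pval a b c d.
Proof.
  unfold pval. rewrite (dist2_sym b a), (dist2_sym c a), (dist2_sym d a).
  rewrite (Rmult_comm (dist2 b d) (dist2 a c)).
  f_equal. ring.
Qed.

Lemma le_sqrt u v : 0 <= u -> u*u <= v -> u <= sqrt v.
Proof. intros. rewrite <- (sqrt_square u) by auto. apply sqrt_le_1; nra. Qed.

Lemma Mm_facts r s : 0 < r -> 0 < s ->
  Rmin r s <= Rmax r s /\ 0 < Rmin r s /\ r * Rmin r s <= s * Rmax r s /\ s * Rmin r s <= r * Rmax r s.
Proof.
  intros. unfold Rmin, Rmax. destruct (Rle_dec r s); nra.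
Qed.

Lemma pval_sorted v0 th r s ta tb tc td : 0 < r -> 0 < s ->
  0 <= ta -> ta < tb -> tb < tc -> tc < td -> td < 4 ->
  pval (rect_param v0 th r s ta) (rect_param v0 th r s tb) (rect_param v0 th r s tc) (rect_param v0 th r s td)
   <= sqrt (1 + (Rmax r s)^2 / (Rmin r s)^2).
Proof.
  intros Hr Hs H0 H1 H2 H3 H4.
  destruct (Mm_facts r s Hr Hs) as [HmM [Hm [Hrm Hsm]]].
  set (M := Rmax r s) in *. set (m := Rmin r s) in *.
  pose proof (core r s M m ta tb tc td Hr Hs HmM Hm Hrm Hsm H0 H1 H2 H3 H4) as C.
  unfold pval. rewrite !dist_frame.
  assert (Pab : 0 < Dd r s ta tb) by (apply Dd_pos; lra).
  assert (Pbc : 0 < Dd r s tb tc) by (apply Dd_pos; lra).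
  assert (Pcd : 0 < Dd r s tc td) by (apply Dd_pos; lra).
  assert (Pad : 0 < Dd r s ta td) by (apply Dd_pos; lra).
  assert (Pac : 0 < Dd r s ta tc) by (apply Dd_pos; lra).
  assert (Pbd : 0 < Dd r s tb td) by (apply Dd_pos; lra).
  set (x := sqrt (Dd r s ta tb) * sqrt (Dd r s tc td)).
  set (y := sqrt (Dd r s ta td) * sqrt (Dd r s tb tc)).
  set (K := 1 + M^2/m^2).
  assert (Hx : x*x = Dd r s ta tb * Dd r s tc td).
  { unfold x. replace (sqrt (Dd r s ta tb) * sqrt (Dd r s tc td) * (sqrt (Dd r s ta tb) * sqrt (Dd r s tc td)))
      with ((sqrt (Dd r s ta tb) * sqrt (Dd r s ta tb)) * (sqrt (Dd r s tc td) * sqrt (Dd r s tc td))) by ring.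
    rewrite !sqrt_sqrt; lra. }
  assert (Hy : y*y = Dd r s ta td * Dd r s tb tc).
  { unfold y. replace (sqrt (Dd r s ta td) * sqrt (Dd r s tb tc) * (sqrt (Dd r s ta td) * sqrt (Dd r s tb tc)))
      with ((sqrt (Dd r s ta td) * sqrt (Dd r s ta td)) * (sqrt (Dd r s tb tc) * sqrt (Dd r s tb tc))) by ring.
    rewrite !sqrt_sqrt; lra. }
  assert (x0 : 0 <= x) by (unfold x; apply Rmult_le_pos; apply sqrt_pos).
  assert (y0 : 0 <= y) by (unfold y; apply Rmult_le_pos; apply sqrt_pos).
  set (Z := Dd r s ta tc * Dd r s tb td).
  assert (HZ : 0 < Z) by (unfold Z; nra).
  assert (HK : 0 < K) by (unfold K; assert (0 <= M^2/m^2) by (unfold Rdiv; apply Rmult_le_pos; [nra| apply Rlt_le, Rinv_0_lt_compat; nra]); lra).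
  assert (Key : (x+y)*(x+y) <= K * Z).
  { assert ((x+y)*(x+y) <= 2*(x*x + y*y)) by (assert (forall a b : R, (a+b)*(a+b) <= 2*(a*a+b*b)) by (intros; pose proof (pow2_ge_0 (a-b)); nra); auto).
    assert (2*(x*x+y*y) <= K*Z).
    { rewrite Hx, Hy. unfold K, Z.
      apply (Rmult_le_reg_l (m^2)). nra.
      replace (m ^ 2 * ((1 + M ^ 2 / m ^ 2) * (Dd r s ta tc * Dd r s tb td))) with
        ((M^2+m^2) * (Dd r s ta tc * Dd r s tb td)) by (field; lra).
      lra. }
    lra. }
  assert (Hs1 : x + y <= sqrt K * sqrt Z).
  { rewrite <- sqrt_mult by lra. apply le_sqrt; lra. }
  assert (HsZ : sqrt Z = sqrt (Dd r s ta tc) * sqrt (Dd r s tb td)) by (unfold Z; apply sqrt_mult; lra).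
  rewrite <- HsZ.
  assert (0 < sqrt Z) by (apply sqrt_lt_R0; lra).
  apply (Rmult_le_reg_r (sqrt Z)); auto.
  unfold Rdiv. rewrite Rmult_assoc, Rinv_l by lra. lra.
Qed.

Lemma pset_upper v0 th r s x : 0 < r -> 0 < s -> Pset v0 th r s x ->
  x <= sqrt (1 + (Rmax r s)^2 / (Rmin r s)^2).
Proof.
  intros Hr Hs [a [b [c [d [_ [_ [_ [_ [_ [_ [Hord Hx]]]]]]]]]]].
  destruct Hord as [ta [tb [tc [td [Ha [Hb [Hc [Hd [Ea [Eb [Ec [Ed Ho]]]]]]]]]]]].
  subst. destruct Ho as [O|[O|[O|O]]].
  - apply pval_sorted; lra.
  - rewrite <- pval_rot. apply pval_sorted; lra.
  - rewrite <- pval_rot, <- pval_rot. apply pval_sorted; lra.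
  - rewrite <- pval_rot, <- pval_rot, <- pval_rot. apply pval_sorted; lra.
Qed.

Lemma dist_self p : dist2 p p = 0.
Proof. unfold dist2. replace ((fst p - fst p) ^ 2 + (snd p - snd p) ^ 2) with 0 by ring. apply sqrt_0. Qed.

Lemma param_inj v0 th r s t1 t2 : 0 < r -> 0 < s -> 0 <= t1 < 4 -> 0 <= t2 < 4 -> t1 <> t2 ->
  rect_param v0 th r s t1 <> rect_param v0 th r s t2.
Proof.
  intros Hr Hs H1 H2 H E.
  assert (Hd : dist2 (rect_param v0 th r s t1) (rect_param v0 th r s t2) = 0) by (rewrite E; apply dist_self).
  rewrite dist_frame in Hd.
  destruct (Rlt_dec t1 t2).
  - assert (0 < Dd r s t1 t2) by (apply Dd_pos; lra).
    assert (0 < sqrt (Dd r s t1 t2)) by (apply sqrt_lt_R0; lra). lra.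
  - assert (0 < Dd r s t2 t1) by (apply Dd_pos; lra).
    assert (Dd r s t1 t2 = Dd r s t2 t1) by (unfold Dd, D'; ring).
    assert (0 < sqrt (Dd r s t1 t2)) by (apply sqrt_lt_R0; lra). lra.
Qed.

Lemma in_pset v0 th r s ta tb tc td : 0 < r -> 0 < s ->
  0 <= ta < 4 -> 0 <= tb < 4 -> 0 <= tc < 4 -> 0 <= td < 4 ->
  ((ta < tb < tc /\ tc < td) \/ (tb < tc < td /\ td < ta) \/
     (tc < td < ta /\ ta < tb) \/ (td < ta < tb /\ tb < tc)) ->
  Pset v0 th r s (pval (rect_param v0 th r s ta) (rect_param v0 th r s tb)
                       (rect_param v0 th r s tc) (rect_param v0 th r s td)).
Proof.
  intros Hr Hs Ha Hb Hc Hd Ho.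
  exists (rect_param v0 th r s ta), (rect_param v0 th r s tb),
         (rect_param v0 th r s tc), (rect_param v0 th r s td).
  repeat split; try (apply param_inj; auto; lra).
  exists ta, tb, tc, td. repeat split; auto; lra.
Qed.

Lemma nuv0 t : 0 <= t < 1 -> nu t = t /\ nv t = 0.
Proof. intros. unfold nu, nv. destruct (Rlt_dec t 1); [auto|lra]. Qed.
Lemma nuv1 t : 1 <= t < 2 -> nu t = 1 /\ nv t = t-1.
Proof. intros. unfold nu, nv. destruct (Rlt_dec t 1); [lra|]. destruct (Rlt_dec t 2); [auto|lra]. Qed.
Lemma nuv2 t : 2 <= t < 3 -> nu t = 3-t /\ nv t = 1.
Proof. intros. unfold nu, nv. destruct (Rlt_dec t 1); [lra|]. destruct (Rlt_dec t 2); [lra|].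
  destruct (Rlt_dec t 3); [auto|lra]. Qed.
Lemma nuv3 t : 3 <= t < 4 -> nu t = 0 /\ nv t = 4-t.
Proof. intros. unfold nu, nv. destruct (Rlt_dec t 1); [lra|]. destruct (Rlt_dec t 2); [lra|].
  destruct (Rlt_dec t 3); [lra|auto]. Qed.

Lemma sqrt_sq' a : 0 <= a -> sqrt (a^2) = a.
Proof. intros. replace (a^2) with (a*a) by ring. apply sqrt_square; auto. Qed.

Lemma nu0 t : 0 <= t < 1 -> nu t = t. Proof. apply nuv0. Qed.
Lemma nv0 t : 0 <= t < 1 -> nv t = 0. Proof. apply nuv0. Qed.
Lemma nu1 t : 1 <= t < 2 -> nu t = 1. Proof. apply nuv1. Qed.
Lemma nv1 t : 1 <= t < 2 -> nv t = t-1. Proof. apply nuv1. Qed.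
Lemma nu2 t : 2 <= t < 3 -> nu t = 3-t. Proof. apply nuv2. Qed.
Lemma nv2 t : 2 <= t < 3 -> nv t = 1. Proof. apply nuv2. Qed.
Lemma nu3 t : 3 <= t < 4 -> nu t = 0. Proof. apply nuv3. Qed.
Lemma nv3 t : 3 <= t < 4 -> nv t = 4-t. Proof. apply nuv3. Qed.
Ltac nuv_rw := repeat match goal with
  | |- context [nu ?t] => first [ rewrite (nu0 t) by lra | rewrite (nu1 t) by lra
                                 | rewrite (nu2 t) by lra | rewrite (nu3 t) by lra ]
  | |- context [nv ?t] => first [ rewrite (nv0 t) by lra | rewrite (nv1 t) by lra
                                 | rewrite (nv2 t) by lra | rewrite (nv3 t) by lra ]
  end.

Lemma config1 v0 th r s : 0 < r -> 0 < s ->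
  Pset v0 th r s (sqrt (1 + r^2/(4*s^2))).
Proof.
  intros Hr Hs.
  replace (sqrt (1 + r^2/(4*s^2))) with
    (pval (rect_param v0 th r s (1/2)) (rect_param v0 th r s 1)
          (rect_param v0 th r s (5/2)) (rect_param v0 th r s 0)).
  - apply in_pset; auto; lra.
  - unfold pval. rewrite !dist_frame.
    set (Q := r^2/4 + s^2).
    assert (E1 : Dd r s (1/2) 1 = (r/2)^2) by (unfold Dd, D', X, Y; nuv_rw; field).
    assert (E2 : Dd r s (5/2) 0 = Q) by (unfold Dd, D', X, Y, Q; nuv_rw; field).
    assert (E3 : Dd r s (1/2) 0 = (r/2)^2) by (unfold Dd, D', X, Y; nuv_rw; field).
    assert (E4 : Dd r s 1 (5/2) = Q) by (unfold Dd, D', X, Y, Q; nuv_rw; field).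
    assert (E5 : Dd r s (1/2) (5/2) = s^2) by (unfold Dd, D', X, Y; nuv_rw; field).
    assert (E6 : Dd r s 1 0 = r^2) by (unfold Dd, D', X, Y; nuv_rw; field).
    rewrite E1, E2, E3, E4, E5, E6.
    rewrite !sqrt_sq' by lra.
    replace (1 + r^2/(4*s^2)) with (Q / s^2) by (unfold Q; field; lra).
    rewrite sqrt_div_alt by nra. rewrite sqrt_sq' by lra. field. lra.
Qed.

Lemma config2 v0 th r s : 0 < r -> 0 < s ->
  Pset v0 th r s (sqrt (1 + s^2/(4*r^2))).
Proof.
  intros Hr Hs.
  replace (sqrt (1 + s^2/(4*r^2))) with
    (pval (rect_param v0 th r s (3/2)) (rect_param v0 th r s 2)
          (rect_param v0 th r s (7/2)) (rect_param v0 th r s 1)).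
  - apply in_pset; auto; lra.
  - unfold pval. rewrite !dist_frame.
    set (Q := r^2 + s^2/4).
    assert (E1 : Dd r s (3/2) 2 = (s/2)^2) by (unfold Dd, D', X, Y; nuv_rw; field).
    assert (E2 : Dd r s (7/2) 1 = Q) by (unfold Dd, D', X, Y, Q; nuv_rw; field).
    assert (E3 : Dd r s (3/2) 1 = (s/2)^2) by (unfold Dd, D', X, Y; nuv_rw; field).
    assert (E4 : Dd r s 2 (7/2) = Q) by (unfold Dd, D', X, Y, Q; nuv_rw; field).
    assert (E5 : Dd r s (3/2) (7/2) = r^2) by (unfold Dd, D', X, Y; nuv_rw; field).
    assert (E6 : Dd r s 2 1 = s^2) by (unfold Dd, D', X, Y; nuv_rw; field).
    rewrite E1, E2, E3, E4, E5, E6.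
    rewrite !sqrt_sq' by lra.
    replace (1 + s^2/(4*r^2)) with (Q / r^2) by (unfold Q; field; lra).
    rewrite sqrt_div_alt by nra. rewrite sqrt_sq' by lra. field. lra.
Qed.

Lemma config3 v0 th r s e : 0 < r -> 0 < s -> 0 < e -> e < r -> e < s ->
  exists x, Pset v0 th r s x /\ sqrt 2 * (1 - e / sqrt (r^2+s^2)) <= x.
Proof.
  intros Hr Hs He Her Hes.
  assert (h1 : 0 < e/r < 1).
  { split. apply Rdiv_lt_0_compat; lra. apply (Rmult_lt_reg_r r); auto. field_simplify; lra. }
  assert (h2 : 0 < e/s < 1).
  { split. apply Rdiv_lt_0_compat; lra. apply (Rmult_lt_reg_r s); auto. field_simplify; lra. }
  exists (pval (rect_param v0 th r s (4 - e/s)) (rect_param v0 th r s 0)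
               (rect_param v0 th r s (e/r)) (rect_param v0 th r s 2)).
  split. { apply in_pset; auto; lra. }
  unfold pval. rewrite !dist_frame.
  set (D := sqrt (r^2+s^2)).
  assert (HD2 : D*D = r^2+s^2) by (unfold D; apply sqrt_sqrt; nra).
  assert (HD0 : 0 < D) by (unfold D; apply sqrt_lt_R0; nra).
  assert (HDr : r <= D) by nra. assert (HDs : s <= D) by nra.
  assert (E1 : Dd r s (4 - e/s) 0 = e^2) by (unfold Dd, D', X, Y; nuv_rw; field; lra).
  assert (E2 : Dd r s 0 (e/r) = e^2) by (unfold Dd, D', X, Y; nuv_rw; field; lra).
  assert (E3 : Dd r s (4 - e/s) (e/r) = 2 * e^2) by (unfold Dd, D', X, Y; nuv_rw; field; lra).
  assert (E4 : Dd r s 0 2 = r^2 + s^2) by (unfold Dd, D', X, Y; nuv_rw; field; lra).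
  assert (E5 : Dd r s (e/r) 2 = (e-r)^2 + s^2) by (unfold Dd, D', X, Y; nuv_rw; field; lra).
  assert (E6 : Dd r s (4 - e/s) 2 = r^2 + (e-s)^2) by (unfold Dd, D', X, Y; nuv_rw; field; lra).
  rewrite E1, E2, E3, E4, E5, E6. fold D.
  rewrite !sqrt_sq' by lra. rewrite sqrt_mult by nra. rewrite sqrt_sq' by lra.
  assert (L5 : D - e <= sqrt ((e-r)^2 + s^2)).
  { destruct (Rle_dec (D - e) 0). pose proof (sqrt_pos ((e-r)^2 + s^2)); lra.
    apply le_sqrt; nra. }
  assert (L6 : D - e <= sqrt (r^2 + (e-s)^2)).
  { destruct (Rle_dec (D - e) 0). pose proof (sqrt_pos (r^2 + (e-s)^2)); lra.
    apply le_sqrt; nra. }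
  assert (S2 : sqrt 2 * sqrt 2 = 2) by (apply sqrt_sqrt; lra).
  assert (S20 : 0 < sqrt 2) by (apply sqrt_lt_R0; lra).
  set (u := sqrt ((e-r)^2 + s^2)) in *. set (v := sqrt (r^2 + (e-s)^2)) in *.
  replace ((e * u + v * e) / (sqrt 2 * e * D)) with ((u + v) / (sqrt 2 * D)) by (field; lra).
  apply (Rmult_le_reg_r (sqrt 2 * D)). nra.
  replace ((u + v) / (sqrt 2 * D) * (sqrt 2 * D)) with (u+v) by (field; lra).
  replace (sqrt 2 * (1 - e / D) * (sqrt 2 * D)) with ((sqrt 2 * sqrt 2) * (D - e)) by (field; lra).
  rewrite S2. lra.
Qed.

Theorem mainTheorem20 (v0 : pt) (th r s : R) (hr : 0 < r) (hs : 0 < s) :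
  exists P : R, is_lub (Pset v0 th r s) P /\
    Rmax (sqrt 2) (sqrt (1 + (Rmax r s)^2 / (4 * (Rmin r s)^2))) <= P /\
    P <= sqrt (1 + (Rmax r s)^2 / (Rmin r s)^2).
Proof.
  assert (Up : is_upper_bound (Pset v0 th r s) (sqrt (1 + (Rmax r s)^2 / (Rmin r s)^2))).
  { intros x Hx. apply (pset_upper v0 th); auto. }
  destruct (completeness (Pset v0 th r s)) as [P HP].
  { exists (sqrt (1 + (Rmax r s)^2 / (Rmin r s)^2)). exact Up. }
  { exists (sqrt (1 + r^2/(4*s^2))). apply config1; auto. }
  exists P. split; [exact HP|]. destruct HP as [HPu HPl]. split.
  - apply Rmax_lub.
    + destruct (Rle_dec (sqrt 2) P) as [h|h]; auto. exfalso.
      apply Rnot_le_lt in h.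
      set (D := sqrt (r^2+s^2)).
      assert (HD0 : 0 < D) by (unfold D; apply sqrt_lt_R0; nra).
      assert (S20 : 0 < sqrt 2) by (apply sqrt_lt_R0; lra).
      set (e := Rmin (Rmin r s / 2) (D*(sqrt 2 - P)/(2*sqrt 2))).
      assert (He1 : e <= Rmin r s / 2) by apply Rmin_l.
      assert (He2 : e <= D*(sqrt 2 - P)/(2*sqrt 2)) by apply Rmin_r.
      assert (Hmr : Rmin r s <= r) by apply Rmin_l. assert (Hms : Rmin r s <= s) by apply Rmin_r.
      assert (Hm0 : 0 < Rmin r s) by (unfold Rmin; destruct (Rle_dec r s); lra).
      assert (He0 : 0 < e).
      { unfold e. apply Rmin_glb_lt. lra. apply Rdiv_lt_0_compat. nra. lra. }
      destruct (config3 v0 th r s e) as [x [Hx Hxv]]; try lra.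
      fold D in Hxv.
      specialize (HPu x Hx).
      assert (sqrt 2 * (e / D) <= (sqrt 2 - P)/2).
      { replace (sqrt 2 * (e / D)) with (e * (sqrt 2 / D)) by (field; lra).
        apply (Rmult_le_reg_r (D / sqrt 2)). apply Rdiv_lt_0_compat; lra.
        replace (e * (sqrt 2 / D) * (D / sqrt 2)) with e by (field; lra).
        replace ((sqrt 2 - P) / 2 * (D / sqrt 2)) with (D*(sqrt 2 - P)/(2*sqrt 2)) by (field; lra).
        exact He2. }
      nra.
    + unfold Rmax, Rmin. destruct (Rle_dec r s).
      * apply HPu. apply config2; auto.
      * apply HPu. apply config1; auto.
  - apply HPl. exact Up.
Qed.
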